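(* Let $S$ be a closed (compact, connected, oriented, without boundary) surface of genus $g\ge1$ and $M$ a single point of $S$. Then every ideal triangulation of $(S,M)$ has property (T4): at the puncture at least four arcs are incident.
   Context: Arcs incident to a puncture are counted with multiplicity: an arc with both endpoints at the puncture counts twice. *)

(* Defs.v *)
From mathcomp Require Import all_boot all_fingroup.
Set Implicit Arguments. Unset Strict Implicit. Unset Printing Implicit Defensive.

(* A triangulated combinatorial map on darts D (half-edges = ends of arcs):
   - [edge] is a fixed-point-free involution pairing the two ends of an arc;
   - [node] rotates (counter-clockwise) around a marked point (puncture);
   - [face] walks around a triangle; edge \o node \o face = id (hypermap
     convention); every face orbit has exactly 3 darts (ideal triangles,
     self-folded ones allowed);
   - the map is connected (the surface is connected).
   Orientability comes from the rotation system. *)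
Definition triangulated_map (D : finType) (edge node face : {perm D}) : Prop :=
  [/\ forall x, edge (node (face x)) = x,
      forall x, edge (edge x) = x /\ edge x != x,
      forall x, fingraph.order face x = 3,
      (0 < #|D|)%N &
      forall x y, connect (fun a b => [|| b == edge a, b == node a | b == face a]) x y].

Definition n_punctures (D : finType) (node : {perm D}) : nat := fcard node D.
Definition n_arcs (D : finType) (edge : {perm D}) : nat := fcard edge D.
Definition n_triangles (D : finType) (face : {perm D}) : nat := fcard face D.

(* The surface has genus g: Euler characteristic V - E + F = 2 - 2g. *)
Definition has_genus (D : finType) (edge node face : {perm D}) (g : nat) : Prop :=
  (n_punctures node + n_triangles face + 2 * g = n_arcs edge + 2)%N.

Definition ideal_triangulation (D : finType) (edge node face : {perm D})
  (g m : nat) : Prop :=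
  [/\ triangulated_map edge node face, has_genus edge node face g &
      n_punctures node = m].

(* Number of arcs incident to the puncture containing dart x, counted with
   multiplicity (an arc with both ends there counts twice) = number of
   arc-ends (darts) around that puncture. *)
Definition puncture_degree (D : finType) (node : {perm D}) (x : D) : nat :=
  fingraph.order node x.

(* Main.v *)
Require Import Defs.
From mathcomp Require Import all_boot all_fingroup.
From mathcomp Require Import zify.

Theorem lemma5p3 (g : nat) (D : finType) (edge node face : {perm D}) :
  (1 <= g)%N ->
  ideal_triangulation edge node face g 1 ->
  forall x : D, (4 <= puncture_degree node x)%N.
Proof.
move=> g1 [[Henf Hinv Hface Hpos Hconn] Hgen Hp] x.
have clT : forall f : D -> D, fclosed f (mem (predT : {pred D})).
  by move=> f y z _; rewrite !inE.
have HF : (n_triangles face * 3 = #|D|)%N.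
  rewrite /n_triangles -(@fcard_order_set _ face (@perm_inj _ face) 3 (predT : {pred D})) //.
  by apply/subsetP => y _; rewrite inE Hface.
have HE : (n_arcs edge * 2 = #|D|)%N.
  rewrite /n_arcs -(@fcard_order_set _ edge (@perm_inj _ edge) 2 (predT : {pred D})) //.
  apply/subsetP => y _; rewrite inE; apply/eqP.
  have [Hee Hne] := Hinv y.
  apply: (@order_cycle _ edge [:: y; edge y]).
  - by rewrite /= Hee !eqxx.
  - by rewrite /= inE eq_sym Hne.
  - by rewrite inE eqxx.
have HV : (#|D| <= puncture_degree node x)%N.
  rewrite /puncture_degree /fingraph.order.
  apply/subset_leq_card/subsetP => y _; rewrite inE.
  apply/negPn/negP => Hxy.
  have : (1 < fcard node (predT : {pred D}))%N.
    apply/fcard_gt1P; [exact: perm_inj| by move=> ? ? _ | ].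
    by exists x; [|exists y].
  by rewrite -/(n_punctures node) Hp.
rewrite /has_genus Hp in Hgen.
lia.
Qed.
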